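(* Let $G$ be a finite simple connected graph with at least one edge, let $W$ be a minimal vertex cover of $G$, and let $s\ge 0$. Then the ideal $\mathfrak p=\langle\mathcal{J}_s(W)\rangle\subseteq\mathcal{J}_s(R)$ is a minimal prime of $\mathcal{J}_s(I(G))$, and the $\mathfrak p$-primary component of $\mathcal{J}_s(I(G))$ is $\mathfrak p$ itself.
   Context: $R=k[x_1,\dots,x_n]$ over a field $k$, with the vertices of $G$ identified with the variables. The edge ideal is $I(G)=\langle x_ix_j : \{x_i,x_j\}\in E(G)\rangle$. A vertex cover is a set of vertices meeting every edge; minimal if no proper subset is a vertex cover. $\mathcal{J}_s(R)=k[x_i^{(l)} : 1\le i\le n,\ 0\le l\le s]$. For $I=\langle f_1,\dots,f_r\rangle\subseteq R$, write $f_m(x_1^{(0)}+x_1^{(1)}t+\cdots+x_1^{(s)}t^s,\dots)\equiv\sum_{l=0}^s\alpha_m^{(l)}t^l \pmod{t^{s+1}}$; then $\mathcal{J}_s(I)=\langle\alpha_m^{(l)}\rangle\subseteq\mathcal{J}_s(R)$. For $W\subseteq V(G)$, $\mathcal{J}_s(W)=\{x^{(j)} : x\in W,\ 0\le j\le s\}$. *)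

(* Defs.v *)
From HB Require Import structures.
From mathcomp Require Import all_boot all_order all_algebra.
From mathcomp Require Import mpoly.
Set Implicit Arguments. Unset Strict Implicit. Unset Printing Implicit Defensive.
Import Order.TTheory GRing.Theory.
Local Open Scope ring_scope.

Definition ideal_gen (A : comPzRingType) (S : A -> Prop) : A -> Prop :=
  fun f => exists (m : nat) (a g : 'I_m -> A),
      (forall i, S (g i)) /\ f = \sum_(i < m) a i * g i.

Definition is_ideal (A : comPzRingType) (I : A -> Prop) : Prop :=
  I 0 /\ (forall f g, I f -> I g -> I (f + g)) /\ (forall a f, I f -> I (a * f)).

Definition subideal (A : comPzRingType) (I J : A -> Prop) : Prop :=
  forall f, I f -> J f.

Definition same_ideal (A : comPzRingType) (I J : A -> Prop) : Prop :=
  forall f, I f <-> J f.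

Definition is_prime_ideal (A : comPzRingType) (P : A -> Prop) : Prop :=
  is_ideal P /\ ~ P 1 /\ (forall f g, P (f * g) -> P f \/ P g).

Definition is_minimal_prime (A : comPzRingType) (I P : A -> Prop) : Prop :=
  is_prime_ideal P /\ subideal I P /\
  (forall Q, is_prime_ideal Q -> subideal I Q -> subideal Q P -> same_ideal Q P).

Definition radical (A : comPzRingType) (I : A -> Prop) : A -> Prop :=
  fun f => exists k : nat, I (f ^+ k).

Definition is_primary_ideal (A : comPzRingType) (Q : A -> Prop) : Prop :=
  is_ideal Q /\ ~ Q 1 /\
  (forall f g, Q (f * g) -> Q f \/ radical Q g).

Definition primary_decomposition (A : comPzRingType) (I : A -> Prop)
  (m : nat) (Q : 'I_m -> A -> Prop) : Prop :=
  (forall i, is_primary_ideal (Q i)) /\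
  (forall f, I f <-> forall i, Q i f).

Definition simple_graph (n : nat) (e : rel 'I_n) : Prop :=
  ssrbool.symmetric e /\ irreflexive e.

Definition graph_connected (n : nat) (e : rel 'I_n) : Prop :=
  forall x y : 'I_n, connect e x y.

Definition is_vertex_cover (n : nat) (e : rel 'I_n) (W : {set 'I_n}) : Prop :=
  forall x y, e x y -> (x \in W) || (y \in W).

Definition is_minimal_vertex_cover (n : nat) (e : rel 'I_n) (W : {set 'I_n})
  : Prop :=
  is_vertex_cover e W /\ (forall W' : {set 'I_n}, W' \proper W -> ~ is_vertex_cover e W').

Definition edge_gens (k : fieldType) (n : nat) (e : rel 'I_n)
  : {mpoly k[n]} -> Prop :=
  fun f => exists x y : 'I_n, e x y /\ f = 'X_x * 'X_y.

Definition edge_ideal (k : fieldType) (n : nat) (e : rel 'I_n) :=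
  ideal_gen (edge_gens (k := k) e).

(* J_s(R) = k[x_i^(l) : i < n, l <= s]; the variable x_i^(l) is indexed by
   mxvec_index i l : 'I_(n * s.+1). *)
Definition jvar (n s : nat) (i : 'I_n) (l : 'I_s.+1) : 'I_(n * s.+1) :=
  mxvec_index i l.

(* f(x^(0) + x^(1) t + ... + x^(s) t^s) as a polynomial in t over J_s(R). *)
Definition jet_subst (k : fieldType) (n s : nat) (f : {mpoly k[n]})
  : {poly {mpoly k[n * s.+1]}} :=
  mmap (fun c : k => (c%:MP_[n * s.+1])%:P)
       (fun i : 'I_n => \sum_(l < s.+1) ('X_(jvar i l))%:P * 'X^l) f.

(* The jet ideal J_s(I) of I = <gens>: generated by the coefficients
   alpha^(l), 0 <= l <= s, of f(x^(0) + ... + x^(s) t^s) for generators f. *)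
Definition jet_ideal (k : fieldType) (n s : nat) (gens : {mpoly k[n]} -> Prop)
  : {mpoly k[n * s.+1]} -> Prop :=
  ideal_gen (fun a => exists (f : {mpoly k[n]}) (l : 'I_s.+1),
                        gens f /\ a = (jet_subst s f)`_l).

Definition jet_var_ideal (k : fieldType) (n s : nat) (W : {set 'I_n})
  : {mpoly k[n * s.+1]} -> Prop :=
  ideal_gen (fun a => exists (x : 'I_n) (l : 'I_s.+1),
                        x \in W /\ a = 'X_(jvar x l)).

(* Main.v *)
Require Import Defs.
From HB Require Import structures.
From mathcomp Require Import all_boot all_order all_algebra.
From mathcomp Require Import mpoly.
From mathcomp Require Import ring zify.
From Stdlib Require Import Classical ClassicalEpsilon.
Set Implicit Arguments. Unset Strict Implicit. Unset Printing Implicit Defensive.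
Import Order.TTheory GRing.Theory.
Local Open Scope ring_scope.

Section Gen.
Variable A : comPzRingType.

Lemma ideal_sum (I : A -> Prop) : is_ideal I ->
  forall m (F : 'I_m -> A), (forall i, I (F i)) -> I (\sum_(i < m) F i).
Proof.
move=> [I0 [ID IM]] m F HF; apply: (big_ind I) => //.
Qed.

Lemma ideal_gen_ideal (S : A -> Prop) : is_ideal (ideal_gen S).
Proof.
split; [|split].
- exists 0%N, (fun _ => 0), (fun _ => 0); split; first by case.
  by rewrite big_ord0.
- move=> f g [m1 [a1 [g1 [H1 ->]]]] [m2 [a2 [g2 [H2 ->]]]].
  exists (m1 + m2)%N,
    (fun i => match split i with inl j => a1 j | inr j => a2 j end),
    (fun i => match split i with inl j => g1 j | inr j => g2 j end).
  split.
    by move=> i; case: (split i).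
  rewrite big_split_ord /=; congr (_ + _); apply: eq_bigr => i _.
    by rewrite (unsplitK (inl _ i)).
  by rewrite (unsplitK (inr _ i)).
- move=> a f [m [a1 [g1 [H1 ->]]]].
  exists m, (fun i => a * a1 i), g1; split => //.
  by rewrite mulr_sumr; apply: eq_bigr => i _; rewrite mulrA.
Qed.

Lemma ideal_gen_in (S : A -> Prop) f : S f -> ideal_gen S f.
Proof.
move=> Sf; exists 1%N, (fun _ => 1), (fun _ => f); split => //.
by rewrite big_ord1 mul1r.
Qed.

Lemma ideal_gen_min (S I : A -> Prop) : is_ideal I -> (forall f, S f -> I f) ->
  subideal (ideal_gen S) I.
Proof.
move=> HI HS f [m [a [g [Hg ->]]]]; apply: ideal_sum => // i.
by case: HI => _ [_ HM]; apply: HM; apply: HS.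
Qed.

Lemma ideal_sub (I : A -> Prop) : is_ideal I -> forall f g, I f -> I g -> I (f - g).
Proof.
move=> [I0 [ID IM]] f g Hf Hg; apply: ID => //.
by rewrite -mulN1r; apply: IM.
Qed.

Lemma prime_prod (P : A -> Prop) : is_prime_ideal P ->
  forall m (F : 'I_m -> A), (forall i, ~ P (F i)) -> ~ P (\prod_(i < m) F i).
Proof.
move=> [HI [H1 HP]]; elim=> [|m IH] F HF.
  by rewrite big_ord0.
rewrite big_ord_recr /= => /HP [].
  by apply: IH => i; apply: HF.
by apply: HF.
Qed.

Lemma prime_pow (P : A -> Prop) : is_prime_ideal P ->
  forall f k, ~ P f -> ~ P (f ^+ k).
Proof.
move=> [HI [H1 HP]] f k Hf; elim: k => [|k IH]; first by rewrite expr0.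
by rewrite exprS => /HP [].
Qed.

Lemma core (J p S : A -> Prop) (u : A) :
  is_prime_ideal p -> same_ideal p (ideal_gen S) -> is_ideal J ->
  subideal J p -> ~ p u -> (forall a, S a -> J (u * a)) ->
  is_minimal_prime J p /\
  (forall (m : nat) (Q : 'I_m -> A -> Prop),
      primary_decomposition J Q ->
      (exists i, same_ideal (radical (Q i)) p) /\
      (forall i, same_ideal (radical (Q i)) p -> same_ideal (Q i) p)).
Proof.
move=> Pp HpS HJ JP nu Hu.
have Hpg : forall (Q : A -> Prop), is_ideal Q -> subideal J Q ->
   (forall a, S a -> Q (u * a) -> Q a) -> subideal p Q.
  move=> Q HQ JQ HQa f /HpS; apply: ideal_gen_min => // a Sa.
  by apply: HQa => //; apply: JQ; apply: Hu.
split.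
  split => //; split => // Q PQ JQ QP f; split; first by apply: QP.
  apply: Hpg => //; first by case: PQ.
  move=> a Sa; case: PQ => _ [_ HP] /HP [] // /QP //.
move=> m Q [HQ HJQ].
have JQi : forall i, subideal J (Q i) by move=> i f /HJQ; apply.
have key : forall i, subideal (radical (Q i)) p -> same_ideal (radical (Q i)) p.
  move=> i Hr f; split; first by apply: Hr.
  move=> pf; exists 1%N; rewrite expr1; move: f pf.
  apply: Hpg; first by case: (HQ i).
    by apply: JQi.
  move=> a Sa; rewrite mulrC; case: (HQ i) => _ [_ HP] /HP [] // /Hr //.
split; last first.
  move=> i Hs f; split.
    by move=> Qf; apply/Hs; exists 1%N; rewrite expr1.
  have Hr : subideal (radical (Q i)) p by move=> g /Hs.
  move: f; apply: Hpg; first by case: (HQ i).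
    by apply: JQi.
  move=> a Sa; rewrite mulrC; case: (HQ i) => _ [_ HP] /HP [] // /Hr //.
apply: NNPP => Hno.
have Hall : forall i, exists f, (exists k, Q i (f ^+ k)) /\ ~ p f.
  move=> i; apply: NNPP => Hn; apply: Hno; exists i; apply: key => f [k Hk].
  apply: NNPP => npf; apply: Hn; exists f; split => //; by exists k.
pose fi i := proj1_sig (constructive_indefinite_description _ (Hall i)).
have fiP : forall i, (exists k, Q i (fi i ^+ k)) /\ ~ p (fi i).
  by move=> i; rewrite /fi; case: constructive_indefinite_description.
pose ki i := proj1_sig (constructive_indefinite_description _ (proj1 (fiP i))).
have kiP : forall i, Q i (fi i ^+ ki i).
  by move=> i; rewrite /ki; case: constructive_indefinite_description.
have JF : J (\prod_(i < m) fi i ^+ ki i).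
  apply/HJQ => j; rewrite (bigD1 j) //= mulrC.
  by case: (HQ j) => [[_ [_ HM]] _]; apply: HM.
apply: (prime_prod Pp (F := fun i => fi i ^+ ki i)); last by apply: JP.
by move=> i; apply: prime_pow => //; case: (fiP i).
Qed.
End Gen.

Lemma rearr (T : comPzRingType) (A B R X : T) : A * B * R * X = (R * A) * (X * B).
Proof. ring. Qed.

Section Spec.
Variables (k : fieldType) (n s : nat) (W : {set 'I_n}).
Local Notation N := (n * s.+1)%N.
Local Notation P := {mpoly k[N]}.

Lemma jvar_inj x l x' l' : @jvar n s x l = @jvar n s x' l' -> x = x' /\ l = l'.
Proof. by rewrite /jvar /mxvec_index => /cast_ord_inj /enum_rank_inj [-> ->]. Qed.

Definition inV (v : 'I_N) : bool :=
  [exists x : 'I_n, exists l : 'I_s.+1, (x \in W) && (v == jvar x l)].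
Definition hphi (v : 'I_N) : P := if inV v then 0 else 'X_v.
Local Notation phi := (mmap (@mpolyC N k) hphi).

Lemma phiX v : phi 'X_v = hphi v.
Proof. by rewrite mmapX mmap1U. Qed.

Definition hj (i : 'I_n) : {poly P} := \sum_(l < s.+1) ('X_(jvar i l))%:P * 'X^l.
Lemma jet_edge x y : jet_subst s ('X_x * 'X_y : {mpoly k[n]}) = hj x * hj y.
Proof.
have -> : jet_subst s ('X_x * 'X_y : {mpoly k[n]}) =
   mmap (polyC \o @mpolyC N k) hj ('X_x * 'X_y) by [].
by rewrite rmorphM /= !mmapX !mmap1U.
Qed.

Local Notation pI := (@jet_var_ideal k n s W).

Lemma pI_ideal : is_ideal pI.
Proof. exact: ideal_gen_ideal. Qed.

Lemma pI_X x l : x \in W -> pI 'X_(jvar x l).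
Proof. by move=> xW; apply: ideal_gen_in; exists x, l. Qed.

Lemma inVP v : inV v -> exists x l, x \in W /\ v = jvar x l.
Proof. by case/existsP => x /existsP [l /andP [xW /eqP ->]]; exists x, l. Qed.

Lemma p_phi f : pI f -> phi f = 0.
Proof.
apply: (ideal_gen_min (I := fun f => phi f = 0)).
  split; first by rewrite rmorph0.
  split; first by move=> f1 g /= Hf Hg; rewrite rmorphD /= Hf Hg addr0.
  by move=> a f1 /= Hf; rewrite rmorphM /= Hf mulr0.
move=> a [x [l [xW ->]]]; rewrite phiX /hphi.
have -> // : inV (jvar x l) by apply/existsP; exists x; apply/existsP; exists l; rewrite xW eqxx.
Qed.

Lemma sub_phi f : pI (f - phi f).
Proof.
have [I0 [ID IM]] := pI_ideal.
have Pr_mul : forall g h, pI (g - phi g) -> pI (h - phi h) -> pI (g * h - phi (g * h)).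
  move=> g h Hg Hh; rewrite rmorphM /=.
  have -> : g * h - phi g * phi h = h * (g - phi g) + phi g * (h - phi h).
    by rewrite !mulrBr [h * g]mulrC [h * phi g]mulrC addrA subrK.
  by apply: ID; apply: IM.
have PrX : forall m, pI ('X_[m] - phi 'X_[m]).
  move=> m; rewrite mpolyXE_id.
  apply: (big_ind (fun g => pI (g - phi g))) => //.
    by rewrite rmorph1 subrr.
  move=> i _; elim: (m i) => [|e IH]; first by rewrite !expr0 rmorph1 subrr.
  rewrite exprS; apply: Pr_mul => //.
  rewrite phiX /hphi; case: ifP => [/inVP [x [l [xW ->]]]|_].
    by rewrite subr0; apply: pI_X.
  by rewrite subrr.
elim/mpolyind: f => [|c m q _ _ IH]; first by rewrite rmorph0 subr0.
rewrite rmorphD /= mmapZ -mul_mpolyC.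
have -> : c%:MP * 'X_[m] + q - (c%:MP * phi 'X_[m] + phi q) =
   c%:MP * ('X_[m] - phi 'X_[m]) + (q - phi q).
    by rewrite mulrBr opprD addrACA.
by apply: ID => //; apply: IM.
Qed.

Lemma p_char f : pI f <-> phi f = 0.
Proof.
split; first exact: p_phi.
move=> H; have := sub_phi f; by rewrite H subr0.
Qed.

Lemma p_prime : is_prime_ideal pI.
Proof.
split; first exact: pI_ideal.
split; first by rewrite p_char rmorph1 => /eqP; rewrite oner_eq0.
move=> f g; rewrite !p_char rmorphM /= => /eqP; rewrite mulf_eq0 => /orP [] /eqP; auto.
Qed.

Lemma inV_W x l : x \in W -> inV (jvar x l).
Proof. by move=> xW; apply/existsP; exists x; apply/existsP; exists l; rewrite xW eqxx. Qed.

Lemma phi_coef_hj x j : x \in W -> phi ((hj x)`_j) = 0.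
Proof.
move=> xW; rewrite /hj coef_sum rmorph_sum; apply: big1 => l _.
by rewrite coefCM rmorphM /= phiX /hphi inV_W // mul0r.
Qed.

Lemma phi_coefM (p q : {poly P}) l :
  (forall j, phi p`_j = 0) \/ (forall j, phi q`_j = 0) -> phi ((p * q)`_l) = 0.
Proof.
move=> H; rewrite coefM rmorph_sum; apply: big1 => j _; rewrite rmorphM /=.
by case: H => ->; rewrite ?mul0r ?mulr0.
Qed.

Variable e : rel 'I_n.
Local Notation J := (@jet_ideal k n s (edge_gens (k := k) e)).

Lemma J_sub_p : is_vertex_cover e W -> subideal J pI.
Proof.
move=> cov; apply: ideal_gen_min; first exact: pI_ideal.
move=> a [f [l [[x [y [exy ->]]] ->]]]; apply/p_char.
rewrite jet_edge; apply: phi_coefM.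
by case/orP: (cov x y exy) => H; [left|right] => j; apply: phi_coef_hj.
Qed.

End Spec.

Section T.
Variables (k : fieldType) (n s : nat) (W : {set 'I_n}).
Local Notation N := (n * s.+1)%N.
Local Notation P := {mpoly k[N]}.
Variable e : rel 'I_n.
Local Notation J := (@jet_ideal k n s (edge_gens (k := k) e)).
Local Notation hj := (@hj k n s).
Definition Xv (x : 'I_n) (j : nat) : P := 'X_(jvar x (inord j)).

Lemma coef_hj x j : (j < s.+1)%N -> (hj x)`_j = Xv x j.
Proof.
move=> Hj; rewrite /hj coef_sum (bigD1 (inord j)) //= big1 => [|l nl].
  by rewrite coefCM coefXn inordK // eqxx mulr1 addr0.
rewrite coefCM coefXn (_ : (j == l) = false) ?mulr0 //.
apply/eqP => E; move/eqP: nl; apply; apply: val_inj; by rewrite /= inordK // E.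
Qed.

Lemma J_ideal : is_ideal J.
Proof. exact: ideal_gen_ideal. Qed.

Lemma gen_J x y l : e x y -> (l < s.+1)%N -> J ((hj x * hj y)`_l).
Proof.
move=> exy Hl; apply: ideal_gen_in; exists ('X_x * 'X_y), (inord l); split.
  by exists x, y.
by rewrite jet_edge inordK.
Qed.

Lemma coef_hxy x y l : (l < s.+1)%N ->
  (hj x * hj y)`_l = \sum_(j < l.+1) Xv x j * Xv y (l - j)%N.
Proof.
move=> Hl; rewrite coefM; apply: eq_bigr => j _.
have Hj : (j < s.+1)%N by apply: leq_trans Hl; apply: ltn_ord.
have Hj2 : (l - j < s.+1)%N by apply: leq_ltn_trans Hl; apply: leq_subr.
by congr (_ * _); apply: coef_hj.
Qed.

Lemma chain x y : e x y -> forall l, (l < s.+1)%N -> J (Xv x l * Xv y 0 ^+ l.+1).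
Proof.
move=> exy; have [J0 [JD JM]] := J_ideal.
elim/ltn_ind => l IH Hl.
set Y := Xv y 0.
have E : Xv x l * Y ^+ l.+1 = Y ^+ l * (hj x * hj y)`_l -
     \sum_(j < l) Xv y (l - j)%N * (Xv x j * Y ^+ l).
  rewrite coef_hxy // big_ord_recr /= subnn mulrDr mulr_sumr.
  rewrite (eq_bigr (fun j : 'I_l => Xv y (l - j)%N * (Xv x j * Y ^+ l))); last first.
    by move=> j _; rewrite [LHS]mulrCA [RHS]mulrC -mulrA.
  rewrite addrC addKr.
  by rewrite exprSr [RHS]mulrCA.
rewrite E; apply: ideal_sub; first exact: J_ideal.
  by apply: (JM); apply: gen_J.
apply: ideal_sum; first exact: J_ideal.
move=> j; apply: (JM).
have Hj := ltn_ord j.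
have -> : Y ^+ l = Y ^+ (l - j.+1) * Y ^+ j.+1 by rewrite -exprD subnK.
rewrite mulrCA; apply: (JM).
by apply: IH => //; lia.
Qed.

Local Notation pI := (@jet_var_ideal k n s W).
Local Notation phi := (mmap (@mpolyC N k) (@hphi k n s W)).

Definition nb (x : 'I_n) : 'I_n := odflt x [pick y | e x y && (y \notin W)].

Lemma nbP : is_minimal_vertex_cover e W -> simple_graph e ->
  forall x, x \in W -> e x (nb x) && (nb x \notin W).
Proof.
move=> [cov min] [sym irr] x xW; rewrite /nb; case: pickP => [y Hy|Hn] //=.
exfalso; apply: (min (W :\ x)); first exact: properD1.
move=> a b eab; rewrite !in_setD1.
have Hc := cov a b eab.
case: (eqVneq a x) => [Ea|na]; case: (eqVneq b x) => [Eb|nb'].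
- by move: eab; rewrite Ea Eb irr.
- have bW : b \in W by move: (Hn b); rewrite -Ea eab /= => /negbFE.
  by rewrite /= bW ?orbT.
- have aW : a \in W by move: (Hn a); rewrite -Eb sym eab /= => /negbFE.
  by rewrite /= aW.
- by [].
Qed.

Lemma notinV y j : y \notin W -> ~~ @inV n s W (jvar y j).
Proof.
move=> yW; apply/negP => /inVP [x [l [xW E]]].
case: (jvar_inj E) => Eyx _; by move: yW; rewrite Eyx xW.
Qed.

Definition u : P := \prod_(x in W) Xv (nb x) 0 ^+ s.+1.

Lemma X_neq0 (v : 'I_N) : ('X_v : P) != 0.
Proof.
apply/eqP => /(congr1 (fun q : P => q@_U_(v))).
by rewrite mcoeffX eqxx mcoeff0 => /eqP; rewrite oner_eq0.
Qed.

Lemma u_notin : is_minimal_vertex_cover e W -> simple_graph e -> ~ pI u.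
Proof.
move=> HW Hs; rewrite p_char /u rmorph_prod => /eqP; apply/negP.
apply/prodf_neq0 => x xW; rewrite rmorphXn expf_neq0 //.
have /andP [_ nW] := nbP HW Hs xW.
by rewrite /Xv /= phiX /hphi (negbTE (notinV _ nW)) X_neq0.
Qed.

Lemma u_gen : is_minimal_vertex_cover e W -> simple_graph e ->
  forall a, (exists x l, x \in W /\ a = 'X_(jvar x l)) -> J (u * a).
Proof.
move=> HW Hs a [x [l [xW ->]]].
have [J0 [JD JM]] := J_ideal.
have /andP [exy _] := nbP HW Hs xW.
rewrite /u (bigD1 x) //=.
have -> : 'X_(jvar x l) = Xv x l by rewrite /Xv inord_val.
set Y := Xv (nb x) 0.
set R := \prod_(i in W | i != x) _.
have Hl : (l <= s)%N by rewrite -ltnS.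
have -> : Y ^+ s.+1 = Y ^+ (s - l) * Y ^+ l.+1 by rewrite -exprD addnS subnK.
have -> : Y ^+ (s - l) * Y ^+ l.+1 * R * Xv x l = (R * Y ^+ (s - l)) * (Xv x l * Y ^+ l.+1).
  exact: rearr.
by apply: (JM); apply: chain.
Qed.
End T.

Unset Implicit Arguments.
Theorem mainTheorem4 (k : fieldType) (n : nat) (e : rel 'I_n)
  (Hsimple : simple_graph e) (Hconn : graph_connected e)
  (Hedge : exists x y : 'I_n, e x y)
  (W : {set 'I_n}) (HW : is_minimal_vertex_cover e W) (s : nat) :
  let p := @jet_var_ideal k n s W in
  let J := @jet_ideal k n s (edge_gens (k := k) e) in
  is_minimal_prime J p /\
  (forall (m : nat) (Q : 'I_m -> {mpoly k[n * s.+1]} -> Prop),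
      primary_decomposition J Q ->
      (exists i, same_ideal (radical (Q i)) p) /\
      (forall i, same_ideal (radical (Q i)) p -> same_ideal (Q i) p)).
Proof.
move=> p J.
apply: (@core _ J p (fun a => exists x l, x \in W /\ a = 'X_(@jvar n s x l))
          (@u k n s W e)).
- exact: p_prime.
- by move=> f.
- exact: ideal_gen_ideal.
- by apply: J_sub_p; case: HW.
- exact: u_notin.
- exact: u_gen.
Qed.
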